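(* Fix an integer $\Delta\ge3$. For $k\ge1$ let $T_k$ be the $(\Delta-1)$-ary tree of depth $k$, and let $\mathcal{T}=\{T_k: k\ge1\}$. Then for every real $d>1$, $\mu_{\log}(\mathcal{T})\le d$.
   Context: The $(\Delta-1)$-ary tree of depth $k$ is the rooted tree in which every vertex at depth less than $k$ has exactly $\Delta-1$ children and all leaves are at depth $k$. A self-avoiding walk (SAW) of length $i$ from $v$ is a walk $v=v_0,\dots,v_i$ with all vertices distinct; $\mathcal{N}_{\le \ell}(G,v)$ is the number of SAWs of length between $1$ and $\ell$ starting at $v$. For a family $\mathcal{H}$ of finite graphs, ''$\mu_{\log}(\mathcal{H})\le d$'' (log-depth connective constant at most $d$) means: there exist constants $a,c$ such that for every $G=(V,E)\in\mathcal{H}$, every $v\in V$, and every $\ell\ge a\log|V|$, one has $\mathcal{N}_{\le\ell}(G,v)\le c\,d^{\ell}$. *)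

(* Defs.v *)
From mathcomp Require Import all_boot.
From Stdlib Require Import Reals.
Set Implicit Arguments. Unset Strict Implicit. Unset Printing Implicit Defensive.

Record fgraph := FGraph { fg_V : finType; fg_e : rel fg_V }.

(* Number of self-avoiding walks of length exactly i starting at v:
   walks v = v_0, v_1, ..., v_i (encoded by the i-tuple (v_1,...,v_i)),
   consecutive vertices adjacent, all i+1 vertices distinct. *)
Definition nSAW (G : fgraph) (v : fg_V G) (i : nat) : nat :=
  #|[set t : i.-tuple (fg_V G) | path (@fg_e G) v t && uniq (v :: t)]|.

Definition N_le (G : fgraph) (v : fg_V G) (l : nat) : nat :=
  \sum_(1 <= i < l.+1) nSAW v i.

Definition mu_log_le (H : fgraph -> Prop) (d : R) : Prop :=
  exists a c : R, forall G : fgraph, H G ->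
    forall (v : fg_V G) (l : nat),
      (a * ln (INR #|fg_V G|) <= INR l)%R ->
      (INR (N_le v l) <= c * d ^ l)%R.

(* The b-ary tree of depth k: vertices are words over 'I_b of length <= k
   (the root is the empty word); w is a child of u iff w = u ++ [:: x]. *)
Definition tree_vertex (b k : nat) : finType := {n : 'I_k.+1 & n.-tuple 'I_b}.

Definition word (b k : nat) (x : tree_vertex b k) : seq 'I_b := tagged x.

Definition is_child (T : eqType) (u w : seq T) : bool :=
  (size w == (size u).+1) && (take (size u) w == u).

Definition tree_adj (b k : nat) : rel (tree_vertex b k) :=
  fun x y => is_child (word x) (word y) || is_child (word y) (word x).

Definition tree_graph (b k : nat) : fgraph := @FGraph (tree_vertex b k) (@tree_adj b k).

(* Main.v *)
Require Import Defs.
From mathcomp Require Import all_boot.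
From Stdlib Require Import Reals Lra.
From mathcomp Require Import zify.
Set Implicit Arguments. Unset Strict Implicit.

Section Words.
Variable T : eqType.
Definition adjw : rel (seq T) := fun x y => is_child x y || is_child y x.

Lemma child_size (u w : seq T) : is_child u w -> size w = (size u).+1.
Proof. by case/andP => /eqP. Qed.

Lemma child_take (u w : seq T) : is_child u w -> take (size u) w = u.
Proof. by case/andP => _ /eqP. Qed.

Lemma parent_uniq (x y u : seq T) : is_child x u -> is_child y u -> x = y.
Proof.
move=> Hx Hy.
have Sx := child_size Hx; have Sy := child_size Hy.
have Exy : size x = size y by lia.
by rewrite -(child_take Hx) -(child_take Hy) Exy.
Qed.

Lemma last_size (u : seq T) s : path adjw u s -> size (last u s) <= size u + size s.
Proof.
elim: s u => [|x s IH] u /=; first by rewrite addn0.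
case/andP => Hux Hp; have := IH x Hp.
case/orP: Hux => /child_size; lia.
Qed.

Lemma down (u w : seq T) s : is_child u w -> path adjw w s -> uniq (u :: w :: s) ->
  path (@is_child T) w s.
Proof.
elim: s u w => [|x s IH] u w //= Huw /andP[Hwx Hp] Hu.
case/orP: Hwx => Hc.
- rewrite Hc /=; apply: (IH w x Hc Hp).
  by move: Hu => /= /andP[].
- exfalso; have E := parent_uniq Huw Hc; subst x.
  by move: Hu; rewrite /= !inE eqxx orbT.
Qed.

Lemma down_last (w : seq T) s : path (@is_child T) w s ->
  size (last w s) = size w + size s /\ take (size w) (last w s) = w.
Proof.
elim: s w => [|x s IH] w /=; first by rewrite addn0 take_size.
case/andP => Hwx Hp; have [H1 H2] := IH x Hp.
have Sx := child_size Hwx.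
split; first by rewrite H1 Sx; lia.
rewrite -(take_takel _ (leqnSn (size w))) -Sx H2.
exact: child_take.
Qed.

Lemma saw_inj (u : seq T) s1 s2 : path adjw u s1 -> uniq (u :: s1) ->
  path adjw u s2 -> uniq (u :: s2) -> size s1 = size s2 -> last u s1 = last u s2 -> s1 = s2.
Proof.
elim: s1 u s2 => [|x s1 IH] u [|y s2] //= /andP[Hux Hp1] Hu1 /andP[Huy Hp2] Hu2 [Hsz] Hl.
have Hxy : x = y.
  case/orP: Hux => Hx; case/orP: Huy => Hy.
  - have [A1 B1] := down_last (down Hx Hp1 Hu1).
    have [A2 B2] := down_last (down Hy Hp2 Hu2).
    have Sx := child_size Hx; have Sy := child_size Hy.
    by rewrite -B1 -B2 Hl Sx Sy.
  - have [A1 _] := down_last (down Hx Hp1 Hu1).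
    have := last_size Hp2; rewrite -Hl A1.
    have Sx := child_size Hx; have Sy := child_size Hy. lia.
  - have [A2 _] := down_last (down Hy Hp2 Hu2).
    have := last_size Hp1; rewrite Hl A2.
    have Sx := child_size Hx; have Sy := child_size Hy. lia.
  - exact: parent_uniq Hx Hy.
subst y; congr (_ :: _); apply: (IH x) => //.
- by move: Hu1 => /andP[].
- by move: Hu2 => /andP[].
Qed.
End Words.

Lemma word_inj b k : injective (@word b k).
Proof.
case=> [n t] [m s] /= E.
have Hnm : n = m.
  apply: val_inj; rewrite /= -(size_tuple t) -(size_tuple s).
  by rewrite /word /= in E; rewrite E.
subst m.
have -> : t = s by apply: val_inj.
by [].
Qed.

Lemma nSAW_le b k (v : tree_vertex b k) i :
  nSAW (G := tree_graph b k) v i <= #|tree_vertex b k|.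
Proof.
rewrite /nSAW -(@card_in_imset _ _ (fun t : i.-tuple (tree_vertex b k) => last v t)).
  exact: max_card.
move=> t1 t2; rewrite !inE => /andP[P1 U1] /andP[P2 U2] E.
apply: val_inj; apply: (inj_map (@word_inj b k)).
apply: (@saw_inj _ (word v)).
- by rewrite path_map.
- by rewrite -(map_cons (@word b k)) (map_inj_uniq (@word_inj b k)).
- by rewrite path_map.
- by rewrite -(map_cons (@word b k)) (map_inj_uniq (@word_inj b k)).
- by rewrite !size_map !size_tuple.
- by rewrite !last_map E.
Qed.

Lemma nSAW0 (G : Defs.fgraph) (v : fg_V G) i : #|fg_V G| <= i -> nSAW v i = 0.
Proof.
move=> Hi; apply/eqP; rewrite cards_eq0; apply/eqP/setP => t; rewrite !inE.
apply/negbTE; apply/negP => /andP[_ U].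
move/card_uniqP: U => /= C.
have := max_card (mem (v :: t)).
rewrite C /= size_tuple => H; have := leq_trans H Hi; by rewrite ltnn.
Qed.

Lemma sum_bound (F : nat -> nat) n l : (forall i, F i <= n) ->
  (forall i, n <= i -> F i = 0) -> \sum_(1 <= i < l.+1) F i <= minn l n * n.
Proof.
move=> H1 H0; elim: l => [|l IH]; first by rewrite big_geq.
rewrite big_nat_recr //.
move: IH; set S := \sum_(1 <= i < l.+1) F i => IH.
change (S + F l.+1 <= minn l.+1 n * n).
case: (ltnP l.+1 n) => h.
- have := H1 l.+1.
  have E1 : minn l n = l by lia.
  rewrite E1 in IH; rewrite mulSn; lia.
- rewrite H0 // addn0; apply: leq_trans IH _; apply: leq_mul => //.
  exact: geq_minr.
Qed.

Lemma N_le_bound b k (v : tree_vertex b k) l :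
  N_le (G := tree_graph b k) v l <= minn l #|tree_vertex b k| * #|tree_vertex b k|.
Proof.
apply: sum_bound => i; first exact: nSAW_le.
exact: (nSAW0 (G := tree_graph b k)).
Qed.

Theorem lemma3p1 (Delta : nat) (d : R) :
  (3 <= Delta)%N -> (1 < d)%R ->
  mu_log_le (fun G => exists k : nat, (1 <= k)%N /\ G = tree_graph (Delta - 1) k) d.
Proof.
move=> HD Hd.
have Hld : (0 < ln d)%R by rewrite -ln_1; apply: ln_increasing; lra.
exists (2 / ln d)%R, 1%R => G [k [Hk ->]] v l Hl.
set n := #|tree_vertex (Delta - 1) k|.
have HN : N_le (G := tree_graph (Delta - 1) k) v l <= n * n.
  have := N_le_bound v l; rewrite -/n => H.
  apply: leq_trans H _; apply: leq_mul => //; exact: geq_minr.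
have Hn : 0 < n by apply/card_gt0P; exists v.
have HnR : (0 < INR n)%R by apply: lt_0_INR; apply/ltP.
apply: Rle_trans (_ : INR (n * n) <= _)%R.
  by apply: le_INR; apply/leP.
rewrite mult_INR -(exp_ln _ HnR) -exp_plus Rmult_1_l -Rpower_pow; last lra.
rewrite /Rpower.
have H2 : (ln (INR n) + ln (INR n) <= INR l * ln d)%R.
  change (2 / ln d * ln (INR n) <= INR l)%R in Hl.
  have H3 : (2 / ln d * ln (INR n) * ln d <= INR l * ln d)%R
    by apply: Rmult_le_compat_r; lra.
  have E : (2 / ln d * ln (INR n) * ln d = 2 * ln (INR n))%R by field; lra.
  lra.
case: (Rle_lt_or_eq_dec _ _ H2) => h.
- by left; apply: exp_increasing.
- by rewrite h; right.
Qed.
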